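(* Let $\mathcal{A}$ be a central and essential arrangement in $\mathbb{Q}^l$ as in the context, with $\lcm$-period $\rho_0$, and let $\sigma$ be a term ordering. If a prime $p$ is not $(\sigma,l)$-lucky for $\mathcal{A}$, then $p$ divides $\rho_0$.
   Context: $\mathcal{A}=\{H_1,\dots,H_n\}$: $n$ distinct linear hyperplanes in $\mathbb{Q}^l$ with $\bigcap H_i=\{0\}$, $H_i=\{\alpha_i=0\}$, $\alpha_i=\sum_{k=1}^lc_{ki}x_k$ with $c_{ki}\in\mathbb{Z}$ not all divisible by any prime. Let $C=(c_{ki})\in\mathrm{Mat}_{l\times n}(\mathbb{Z})$ with columns $c_1,\dots,c_n$; for nonempty $J=\{i_1<\dots<i_k\}\subseteq[n]$, $C_J=(c_{i_1},\dots,c_{i_k})$, with Smith normal form having nonzero diagonal entries $e_{J,1}\mid\dots\mid e_{J,r}$ (positive), $r=\mathrm{rk}(C_J)$; $e(J)=e_{J,r}$ and $\rho_0=\lcm\{e(J): 1\le|J|\le l\}$. Gröbner notions: for a term ordering $\sigma$ and nonzero $f\in\mathbb{Z}[x_1,\dots,x_l]$, $\mathrm{LM}_\sigma(f)$ is the $\sigma$-leading term times its coefficient $\mathrm{LC}_\sigma(f)$. A minimal strong $\sigma$-Gröbner basis of an ideal $I\subseteq\mathbb{Z}[x_1,\dots,x_l]$ is a finite generating set $G$ of nonzero elements of $I$ such that every nonzero $f\in I$ has $\mathrm{LM}_\sigma(f)$ divisible by some $\mathrm{LM}_\sigma(g)$, $g\in G$, and no $\mathrm{LM}_\sigma(g)$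 divides $\mathrm{LM}_\sigma(g')$ for distinct $g,g'$; its set of leading coefficients is independent of the choice. $p$ is $\sigma$-lucky for $I$ if it divides none of them; $p$ is $(\sigma,l)$-lucky for $\mathcal{A}$ if it is $\sigma$-lucky for every ideal $\langle\alpha_{i_1},\dots,\alpha_{i_l}\rangle\subseteq\mathbb{Z}[x_1,\dots,x_l]$ with $i_1<\dots<i_l$ and $\operatorname{codim}(H_{i_1}\cap\dots\cap H_{i_l})=l$. *)

(* Defs.v *)
From HB Require Import structures.
From mathcomp Require Import all_boot all_order all_algebra.
From mathcomp Require Import mpoly.
Set Implicit Arguments. Unset Strict Implicit. Unset Printing Implicit Defensive.
Import Order.TTheory GRing.Theory Num.Theory.
Local Open Scope ring_scope.

Section Arrangement.
Variables (l n : nat).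

Definition hform (C : 'M[int]_(l, n)) (i : 'I_n) (x : 'rV[rat]_l) : rat :=
  \sum_(k < l) (C k i)%:~R * x 0 k.

(* the column submatrix C_J, columns in increasing order of index *)
Definition colsubJ (C : 'M[int]_(l, n)) (J : {set 'I_n}) : 'M[int]_(l, #|J|) :=
  colsub (fun k : 'I_#|J| => enum_val k) C.

End Arrangement.

Definition snf_diag m k (M : 'M[int]_(m, k)) : seq int :=
  match int_Smith_normal_form M with
  | existT2 _ _ (existT2 _ _ d) => sval d
  end.

(* e(M) : the last (largest) nonzero diagonal entry of the Smith normal form,
   made positive *)
Definition snf_e m k (M : 'M[int]_(m, k)) : nat :=
  absz (last 1%R [seq x <- snf_diag M | x != 0%R]).

Definition rho0 l n (C : 'M[int]_(l, n)) : nat :=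
  \big[lcmn/1%N]_(J : {set 'I_n} | (0 < #|J| <= l)%N) snf_e (colsubJ C J).

Section Groebner.
Variable l : nat.
Local Notation P := {mpoly int[l]}.

Definition alpha n (C : 'M[int]_(l, n)) (i : 'I_n) : P :=
  \sum_(k < l) (C k i)%:MP * 'X_k.

Definition term_order (le : rel 'X_{1..l}) : Prop :=
  [/\ reflexive le, antisymmetric le, transitive le & total le] /\
  (forall m, le 0%MM m) /\
  (forall m1 m2 m3, le m1 m2 -> le (m1 + m3)%MM (m2 + m3)%MM).

Definition lexp (le : rel 'X_{1..l}) (f : P) : 'X_{1..l} :=
  foldr (fun m acc => if le acc m then m else acc) 0%MM (msupp f).

Definition LC (le : rel 'X_{1..l}) (f : P) : int := f@_(lexp le f).
Definition LM (le : rel 'X_{1..l}) (f : P) : P := LC le f *: 'X_[lexp le f].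

Definition mdvd (a b : P) : Prop := exists q : P, b = q * a.

Definition in_ideal (gs : seq P) (f : P) : Prop :=
  exists cs : seq P, f = \sum_(i < size gs) cs`_i * gs`_i.

Definition min_strong_GB (le : rel 'X_{1..l}) (gens G : seq P) : Prop :=
  [/\ uniq G,
      (forall g, g \in G -> g != 0 /\ in_ideal gens g),
      (forall f, in_ideal G f <-> in_ideal gens f),
      (forall f, in_ideal gens f -> f != 0 ->
          exists2 g, g \in G & mdvd (LM le g) (LM le f)) &
      (forall g g', g \in G -> g' \in G -> g != g' ->
          ~ mdvd (LM le g) (LM le g'))].

Definition lucky (le : rel 'X_{1..l}) (p : nat) (gens : seq P) : Prop :=
  forall G, min_strong_GB le gens G ->
    forall g, g \in G -> ~~ (p%:Z %| LC le g)%Z.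

Definition lucky_arr n (C : 'M[int]_(l, n)) (le : rel 'X_{1..l}) (p : nat) : Prop :=
  forall J : {set 'I_n}, #|J| = l ->
    (* codim (H_{i_1} cap ... cap H_{i_l}) = l, i.e. the intersection is {0} *)
    (forall x : 'rV[rat]_l, (forall i, i \in J -> hform C i x = 0) -> x = 0) ->
    lucky le p [seq alpha C i | i <- enum J].

End Groebner.

(* Main.v *)
Require Import Defs.
From HB Require Import structures.
From mathcomp Require Import all_boot all_order all_algebra.
From mathcomp Require Import mpoly.
From Stdlib Require Import Classical.
Import Order.TTheory GRing.Theory Num.Theory.
Local Open Scope ring_scope.



Section Lexp.
Variable l : nat.
Local Notation P := {mpoly int[l]}.
Variable le : rel 'X_{1..l}.
Hypothesis hto : term_order le.

Lemma foldr_spec (s : seq 'X_{1..l}) :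
  let F := foldr (fun m acc => if le acc m then m else acc) 0%MM s in
  (s != [::] -> F \in s) /\ (forall y, y \in s -> le y F).
Proof.
case: hto => [[refl anti tr tot] [le0 mono]].
elim: s => [|x s [IH1 IH2]] //=.
split.
  case: ifP => h; first by rewrite mem_head.
  case: s IH1 IH2 h => [|y s] IH1 IH2 h /=; first by rewrite le0 in h.
  by rewrite in_cons IH1 ?orbT.
move=> y; rewrite in_cons => /orP [/eqP->|ys].
  case: ifP => h; first exact: refl.
  by have := tot x (foldr (fun m acc => if le acc m then m else acc) 0%MM s); rewrite h orbF.
case: ifP => h; last exact: IH2.
exact: tr (IH2 _ ys) h.
Qed.

Lemma lexp_max f m : m \in msupp f -> le m (lexp le f).
Proof. by have [_ H] := foldr_spec (msupp f); apply: H. Qed.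

Lemma lexp_in f : f != 0 -> lexp le f \in msupp f.
Proof.
move=> fnz; have [H _] := foldr_spec (msupp f); apply: H.
by rewrite msupp_eq0.
Qed.

Lemma lexp_eq f m : f@_m != 0 -> (forall m', m' \in msupp f -> le m' m) ->
  lexp le f = m.
Proof.
case: hto => [[refl anti tr tot] [le0 mono]] => fm H.
have fnz : f != 0 by apply: contraNneq fm => ->; rewrite mcoeff0.
apply: anti; rewrite H ?lexp_in //=; apply: lexp_max.
by rewrite mcoeff_msupp.
Qed.

End Lexp.



Section Ideal.
Variable l : nat.
Local Notation P := {mpoly int[l]}.
Variable gs : seq P.

Lemma in_idealP f :
  in_ideal gs f <-> exists c : 'I_(size gs) -> P, f = \sum_i c i * gs`_i.
Proof.
split=> [[cs ->]|[c ->]]; first by exists (fun i => cs`_i).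
exists [seq c j | j <- enum 'I_(size gs)]; apply: eq_bigr => i _.
by rewrite (nth_map i) ?size_enum_ord // nth_ord_enum.
Qed.

Lemma in_idealD f1 f2 : in_ideal gs f1 -> in_ideal gs f2 -> in_ideal gs (f1 + f2).
Proof.
move=> /in_idealP [c1 ->] /in_idealP [c2 ->]; apply/in_idealP.
exists (fun i => c1 i + c2 i); rewrite -big_split; apply: eq_bigr => i _.
by rewrite mulrDl.
Qed.

Lemma in_idealM q f : in_ideal gs f -> in_ideal gs (q * f).
Proof.
move=> /in_idealP [c ->]; apply/in_idealP.
exists (fun i => q * c i); rewrite mulr_sumr; apply: eq_bigr => i _.
by rewrite mulrA.
Qed.

Lemma in_ideal0coef f : (forall i : 'I_(size gs), gs`_i@_0%MM = 0) ->
  in_ideal gs f -> f@_0%MM = 0.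
Proof.
move=> h /in_idealP [c ->].
rewrite raddf_sum big1 // => i _.
have := (mcoeff0_is_multiplicative l int).1 (c i) (gs`_i). move=> /= ->. by rewrite h mulr0.
Qed.

End Ideal.



Section Main.
Variable l : nat.
Local Notation P := {mpoly int[l]}.
Variable le : rel 'X_{1..l}.
Hypothesis hto : term_order le.

Lemma LC_dvd k (M : 'M[int]_(l, k)) (B : 'M[int]_(k, l)) (D : int)
  (gens G : seq P) g :
  size gens = k -> (forall j : 'I_k, gens`_j = \sum_i (M i j)%:MP * 'X_i) ->
  M *m B = D%:M -> min_strong_GB le gens G -> g \in G -> (LC le g %| D)%Z.
Proof.
move=> hs hg hMB [uG hGI hGeq hGB hmin] gG; subst k.
have [gnz gI] := hGI g gG.
set m := lexp le g; set c := LC le g.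
have cE : c = g@_m by [].
have cnz : c != 0 by rewrite cE -mcoeff_msupp lexp_in.
have ideal0 : forall f, in_ideal gens f -> f@_0%MM = 0.
  move=> f0; apply: in_ideal0coef => j; rewrite hg raddf_sum big1 // => i _.
  by rewrite /= mcoeffCM mcoeffX mnm1_eq0 mulr0.
have mnz : m != 0%MM.
  by apply: contraNneq cnz => m0; rewrite cE m0 ideal0.
have [kk hk] : exists kk, (0 < m kk)%N.
  apply/existsP; apply: contraNT mnz; rewrite negb_exists => /forallP H.
  apply/eqP/mnmP => i; rewrite mnm0E; have := H i; rewrite lt0n negbK.
  by move/eqP.
have DXk : forall kk : 'I_l, in_ideal gens (D *: 'X_kk).
  move=> k0; apply/in_idealP; exists (fun j => (B j k0)%:MP).
  under eq_bigr do rewrite hg mulr_sumr.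
  rewrite exchange_big /=.
  transitivity (\sum_i ((M *m B) i k0)%:MP * 'X_i).
    rewrite hMB (bigD1 k0) //= big1 ?addr0 => [|i ne].
      by rewrite mxE eqxx mulr1n mul_mpolyC.
    by rewrite mxE (negbTE ne) mulr0n mpolyC0 mul0r.
  apply: eq_bigr => i _; rewrite mxE raddf_sum /= mulr_suml.
  apply: eq_bigr => j _; rewrite mpolyCM mulrA.
  by rewrite [X in X * _ = _](mulrC ((M i j)%:MP)).
have DX : in_ideal gens (D *: 'X_[m]).
  have Um : (U_(kk) <= m)%MM.
    by apply/mnm_lepP => i; rewrite mnm1E; case: eqP => [<-|].
  rewrite -(submK Um) mpolyXD scalerAr; exact: in_idealM.
case: (Bezoutz c D) => u [v huv].
set h := gcdz c D.
set f := u *: g + v *: (D *: 'X_[m]).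
have fI : in_ideal gens f.
  apply: in_idealD; last by rewrite -mul_mpolyC; exact: in_idealM.
  by rewrite -mul_mpolyC; exact: in_idealM.
have fm : f@_m = h.
  by rewrite mcoeffD !mcoeffZ mcoeffX eqxx mulr1 -cE.
have hnz : h != 0 by rewrite gcdz_eq0 negb_and cnz.
have lf : lexp le f = m.
  apply: lexp_eq => //; first by rewrite fm.
  move=> m'; rewrite mcoeff_msupp => fm'.
  case: (boolP (m' \in msupp g)) => [/lexp_max|]; first exact.
  rewrite mcoeff_msupp negbK => /eqP g0.
  move: fm'; rewrite mcoeffD !mcoeffZ g0 mulr0 add0r mcoeffX.
  case: (eqVneq m m') => [<- _|_]; last by rewrite mulr0 mulr0 eqxx.
  by case: hto => [[refl _ _ _] _]; apply: refl.
have fnz : f != 0 by apply: contraNneq hnz => f0; rewrite -fm f0 mcoeff0.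
have [g' g'G [q dv]] := hGB f fI fnz.
have LMf : LM le f = h *: 'X_[m] by rewrite /LM /LC lf fm.
have LMg : LM le g = c *: 'X_[m] by [].
have dvg : mdvd (LM le g') (LM le g).
  exists ((c %/ h)%Z%:MP * q); rewrite -mulrA -dv LMf LMg mul_mpolyC scalerA.
  by rewrite divzK // dvdz_gcdl.
have g'g : g' = g.
  by apply/eqP; apply: contraT => ne; have := hmin g' g g'G gG ne dvg.
move: dv; rewrite g'g LMf LMg -scalerAr => /(congr1 (mcoeff m)).
rewrite mcoeffZ mcoeffX eqxx mulr1 mcoeffZ.
have := mcoeffMX q m 0%MM; rewrite addm0 => -> hE.
apply: (dvdz_trans _ (dvdz_gcdr c D)); rewrite -/h hE.
by apply/dvdzP; exists q@_0%MM; rewrite mulrC.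
Qed.

End Main.



Lemma last_dvd {t : seq int} {x : int} : sorted dvdz t -> x \in t -> (x %| last 1 t)%Z.
Proof.
elim: t => [|a t IH] //= st; rewrite in_cons => /orP [/eqP->|xt].
  have := mem_last a t; rewrite in_cons => /orP [/eqP->|lt]; first exact: dvdzz.
  by have /allP := order_path_min dvdz_trans st; apply.
case: t IH st xt => [|b t] IH st xt //=.
by apply: IH => //; apply: path_sorted st.
Qed.

Lemma snf_dvd l (M : 'M[int]_l) (p : nat) :
  prime p -> \det M != 0 -> (p%:Z %| \det M)%Z -> (p %| snf_e M)%N.
Proof.
move=> pp Dnz pD; rewrite /snf_e /snf_diag.
case: int_Smith_normal_form => L uL [R uR [d sd E]] /=.
have dE : \matrix_(i, j) (d`_i *+ (i == j :> nat)) = diag_mx (\row_(i < l) d`_i)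
   :> 'M[int]_l by apply/matrixP => i j; rewrite !mxE.
have prodE : \prod_i (\row_(i < l) d`_i) 0 i = \prod_(i < l) d`_i.
  by apply: eq_bigr => i _; rewrite mxE.
rewrite E dE !det_mulmx det_diag prodE in pD Dnz.
have nU : forall A : 'M[int]_l, A \in unitmx -> ~~ (p %| `|\det A|)%N.
  move=> A; rewrite unitmxE => /unitrP [y [h1 _]].
  apply/negP => pA; have := dvdn_mull `|y| pA.
  by rewrite -abszM h1 /= Euclid_dvd1.
move: pD; rewrite dvdzE !abszM !Euclid_dvdM // (negbTE (nU _ uL)) (negbTE (nU _ uR)).
rewrite orbF /= (big_morph (fun x : int => `|x|%N) abszM (erefl : `|1%R|%N = 1%N)).
rewrite Euclid_dvd_prod // big_has_cond => /hasP [i _ /= pdi].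
have dinz : d`_i != 0.
  apply: contraNneq Dnz => d0; rewrite (bigD1 i) //= d0 mul0r.
  by rewrite mulr0 mul0r.
have din : d`_i \in [seq x <- d | x != 0].
  rewrite mem_filter dinz /= mem_nth //; rewrite ltnNge; apply: contra dinz.
  by move=> h; rewrite nth_default.
have := last_dvd (sorted_filter dvdz_trans _ sd) din.
rewrite dvdzE => h; exact: dvdn_trans pdi h.
Qed.

Lemma final l k (M : 'M[int]_(l, k)) (hk : k = l) (p : nat) (c : int) :
  prime p ->
  (forall x : 'rV[rat]_l, x *m map_mx (@intmul rat 1) M = 0 -> x = 0) ->
  (forall B D, M *m B = D%:M -> (c %| D)%Z) -> (p%:Z %| c)%Z ->
  (0 < l)%N && (p %| snf_e M)%N.
Proof.
move=> pp hx hc pc; subst k.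
have pD : (p%:Z %| \det M)%Z := dvdz_trans pc (hc _ _ (mul_mx_adj M)).
case: l M hx hc pD => [|l'] M hx hc pD.
  by move: pD; rewrite det_mx00 dvdzE /= Euclid_dvd1.
rewrite /=; apply: snf_dvd => //.
apply/negP => /eqP D0.
have : \det (map_mx (@intmul rat 1) M) == 0.
  by rewrite (det_map_mx (@intmul rat 1)) D0.
case/det0P => v vnz vM.
by move: vnz; rewrite (hx v vM) eqxx.
Qed.



Theorem proposition7p5 (l n : nat) (C : 'M[int]_(l, n))
  (le : rel 'X_{1..l}) (p : nat) :
  (* each alpha_i has coprime integer coefficients *)
  (forall (i : 'I_n) (q : nat), prime q -> exists k : 'I_l, ~~ (q%:Z %| C k i)%Z) ->
  (* the hyperplanes H_i are pairwise distinct *)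
  (forall i j : 'I_n, i != j ->
     ~ (forall x : 'rV[rat]_l, (hform C i x == 0) = (hform C j x == 0))) ->
  (* the arrangement is essential: the intersection of all H_i is {0} *)
  (forall x : 'rV[rat]_l, (forall i, hform C i x = 0) -> x = 0) ->
  term_order le ->
  prime p ->
  ~ lucky_arr C le p ->
  (p %| rho0 C)%N.
Proof.
move=> _ _ _ hto pp nl.
have [J hJ] := not_all_ex_not _ _ nl.
have [hc hJ'] := imply_to_and _ _ hJ.
have [hcod hnl] := imply_to_and _ _ hJ'.
have [G hG] := not_all_ex_not _ _ hnl.
have [hGB hG'] := imply_to_and _ _ hG.
have [g hg] := not_all_ex_not _ _ hG'.
have [gG hg'] := imply_to_and _ _ hg.
have pg : (p%:Z %| LC le g)%Z.
  by case: (boolP (p%:Z %| LC le g)%Z) => // h; case: hg'.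
have := @final l #|J| (colsubJ C J) hc p (LC le g) pp.
case/(_ _ _ pg)/andP.
- move=> x hx; apply: hcod => i iJ.
  rewrite /hform -(enum_rankK_in iJ iJ).
  set j := enum_rank_in iJ i.
  have := congr1 (fun A : 'rV[rat]_#|J| => A 0 j) hx; rewrite /= !mxE => h; apply: (etrans _ h).
  by apply: eq_bigr => k _; rewrite !mxE mulrC.
- move=> B D hB; apply: (@LC_dvd l le hto #|J| (colsubJ C J) B D _ G g _ _ hB hGB gG).
    by rewrite size_map -cardE.
  move=> j; have jlt : (j < size (enum J))%N by rewrite -cardE.
  rewrite (nth_map (enum_val j)) //.
  rewrite /enum_val (set_nth_default (enum_default j) _ jlt) /alpha.
  by apply: eq_bigr => k _; rewrite !mxE.
move=> l0 pe; rewrite /rho0 (bigD1 J) /=; last by rewrite hc l0 leqnn.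
exact: dvdn_trans pe (dvdn_lcml _ _).
Qed.
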